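(* Let $c>0$ and $0<p\le 1$, and define the hybrid ordinary-$\ell_p$ (HOP) function $l_{p,c}:\mathbb{R}\to\mathbb{R}$ by $$l_{p,c}(x)=\begin{cases} x^2/2, & |x|\le c,\\ \frac{1}{p}c^{2-p}|x|^p+\frac{c^2}{2}-\frac{1}{p}c^2, & |x|>c.\end{cases}$$ Define the (extended-real-valued) implicit regularizer $\varphi_{p,c}(y)=\sup_{t\in\mathbb{R}}\big[l_{p,c}(t)-\tfrac{(t-y)^2}{2}\big]$. Then for every $x\in\mathbb{R}$, $$l_{p,c}(x)=\min_{y\in\mathbb{R}}\ \frac{(x-y)^2}{2}+\varphi_{p,c}(y),$$ and this minimum is attained uniquely at $$y^\star=P_{\varphi_{p,c}}(x):=\max\{0,\ |x|-c^{2-p}|x|^{p-1}\}\cdot\operatorname{sign}(x),$$ with the convention $P_{\varphi_{p,c}}(0)=0$.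
   Context: $\operatorname{sign}(x)$ denotes the sign of $x$ (with $\operatorname{sign}(0)=0$). The function $l_{p,c}$ is continuously differentiable; for $p=1$ it is the Huber function. *)

(* Defs.v *)
From HB Require Import structures.
From mathcomp Require Import all_boot all_order all_algebra.
From mathcomp Require Import all_classical all_reals all_analysis.
Set Implicit Arguments. Unset Strict Implicit. Unset Printing Implicit Defensive.
Import Order.TTheory GRing.Theory Num.Theory.
Local Open Scope classical_set_scope.
Local Open Scope ring_scope.

Section HOP.
Variable R : realType.

Definition hop (p c x : R) : R :=
  if `|x| <= c then x ^+ 2 / 2
  else p^-1 * c `^ (2 - p) * `|x| `^ p + c ^+ 2 / 2 - p^-1 * c ^+ 2.

Definition hop_phi (p c y : R) : \bar R :=
  ereal_sup [set ((hop p c t - (t - y) ^+ 2 / 2)%:E) | t in [set: R]].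

Definition hop_prox (p c x : R) : R :=
  if x == 0 then 0
  else Num.max 0 (`|x| - c `^ (2 - p) * `|x| `^ (p - 1)) * Num.sg x.
End HOP.

(* Main.v *)
Require Import Defs.
From HB Require Import structures.
From mathcomp Require Import all_boot all_order all_algebra.
From mathcomp Require Import all_classical all_reals all_analysis.
From mathcomp Require Import ring lra.
Import Order.TTheory GRing.Theory Num.Theory.
Import numFieldNormedType.Exports.
Local Open Scope classical_set_scope.
Local Open Scope ring_scope.

Section S.
Variable R : realType.

Lemma tangent_pow (p s u : R) : 0 < p -> p <= 1 -> 0 <= s -> 0 < u ->
  s `^ p <= u `^ p + p * u `^ (p - 1) * (s - u).
Proof.
move=> p0 p1 s0 u0.
have [->|pl1] := eqVneq p 1.
  rewrite subrr powRr0 !powRr1 ?(ltW u0)// mul1r mul1r addrC subrK //.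

have pl : p < 1 by rewrite lt_neqAle pl1 p1.
have q0 : 0 < 1 - p by rewrite subr_gt0.
have := (@conjugate_powR R (s `^ p) (u `^ (1 - p)) p^-1 (1 - p)^-1)
  (powR_ge0 _ _) (powR_ge0 _ _) ltac:(by rewrite invr_gt0) ltac:(by rewrite invr_gt0).
rewrite !invrK -!powRrM !mulfV ?gt_eqF// !powRr1 ?(ltW u0)//.
move=> /(_ ltac:(by rewrite subrKC)) H.
have up : 0 < u `^ (p - 1) by apply: powR_gt0.
have := ler_wpM2l (ltW up) H.
have e1 : u `^ (p - 1) * (s `^ p * u `^ (1 - p)) = s `^ p.
  rewrite mulrCA -powRD; last by rewrite (gt_eqF u0) implybT.
  have -> : p - 1 + (1 - p) = 0 by ring.
  by rewrite powRr0 mulr1.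
have e2 : u `^ (p - 1) * u = u `^ p by rewrite mulrC mulr_powRB1 // ltW.
rewrite e1 => /le_trans; apply.
rewrite -[u `^ p]e2.
rewrite le_eqVlt; apply/orP; left; apply/eqP; ring.
Qed.

Variables (p c : R).
Hypotheses (hc : 0 < c) (hp0 : 0 < p) (hp1 : p <= 1).

Let a := c `^ (2 - p).
Let E (s : R) := s ^+ 2 / 2 - p^-1 * a * s `^ p - c ^+ 2 / 2 + p^-1 * c ^+ 2.
Let hh (s : R) := if s <= c then 0 else E s.
Let GG (u : R) := if u == 0 then 0 else Num.max 0 (u - a * u `^ (p - 1)).

Lemma a_gt0 : 0 < a. Proof. exact: powR_gt0. Qed.

Lemma hopE t : hop p c t = t ^+ 2 / 2 - hh `|t|.
Proof.
rewrite /hop /hh /E; case: ifP => _; first by rewrite subr0.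
rewrite real_normK ?num_real // /a; field; exact: lt0r_neq0.
Qed.

Lemma acp : a * c `^ p = c ^+ 2.
Proof.
rewrite /a -powRD; last by rewrite (gt_eqF hc) implybT.
by rewrite subrK -[2]/(2%:R) powR_mulrn // ltW.
Qed.

Lemma acp1 : a * c `^ (p - 1) = c.
Proof.
rewrite /a -powRD; last by rewrite (gt_eqF hc) implybT.
have -> : 2 - p + (p - 1) = 1 by ring.
by rewrite powRr1 // ltW.
Qed.

Lemma Ec : E c = 0.
Proof. rewrite /E -mulrA acp; ring. Qed.

Lemma Etan s u : 0 <= s -> 0 < u -> E u + (u - a * u `^ (p - 1)) * (s - u) <= E s.
Proof.
move=> s0 u0.
have T := @tangent_pow p s u hp0 hp1 s0 u0.
have h1 : 0 <= p^-1 * a * (u `^ p + p * u `^ (p - 1) * (s - u) - s `^ p).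
  by rewrite mulr_ge0 ?subr_ge0 // mulr_ge0 ?invr_ge0 ?ltW // a_gt0.
have h2 : 0 <= (s - u) ^+ 2 / 2 by rewrite divr_ge0 ?sqr_ge0.
have e : E s - (E u + (u - a * u `^ (p - 1)) * (s - u)) =
  (s - u) ^+ 2 / 2 + p^-1 * a * (u `^ p + p * u `^ (p - 1) * (s - u) - s `^ p).
  rewrite /E; field; exact: lt0r_neq0.
by rewrite -subr_ge0 e addr_ge0.
Qed.
Arguments Etan {s u}.

Lemma upow {u} : 0 < u -> u `^ (2 - p) * u `^ (p - 1) = u.
Proof.
move=> u0; rewrite -powRD; last by rewrite (gt_eqF u0) implybT.
have -> : 2 - p + (p - 1) = 1 by ring.
by rewrite powRr1 // ltW.
Qed.

Lemma GG_small u : 0 <= u -> u <= c -> GG u = 0.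
Proof.
move=> u0 uc; rewrite /GG; case: ifPn => // un0.
have u0' : 0 < u by rewrite lt_neqAle eq_sym un0.
apply: max_l; rewrite subr_le0.
rewrite -{1}(upow u0') ler_wpM2r ?powR_ge0 //.
by apply: ge0_ler_powR; rewrite ?subr_ge0 ?nnegrE ?(ltW hc) // (le_trans hp1) // ler1n.
Qed.

Lemma GG_big {u} : c <= u -> GG u = u - a * u `^ (p - 1) /\ 0 <= u - a * u `^ (p - 1).
Proof.
move=> cu; have u0 : 0 < u by exact: lt_le_trans cu.
have H : 0 <= u - a * u `^ (p - 1).
  rewrite subr_ge0 -{2}(upow u0) ler_wpM2r ?powR_ge0 //.
  by apply: ge0_ler_powR; rewrite ?subr_ge0 ?nnegrE ?(ltW hc) ?(ltW u0) // (le_trans hp1) // ler1n.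
by rewrite /GG (gt_eqF u0) max_r.
Qed.

Lemma GG_ge0 u : 0 <= GG u.
Proof. by rewrite /GG; case: ifP => // _; rewrite le_max lexx. Qed.

Lemma keyH s u : 0 <= s -> 0 <= u -> hh u + GG u * (s - u) <= hh s.
Proof.
move=> s0 u0.
have hsE : 0 <= hh s.
  rewrite /hh; case: ifPn => //; rewrite -ltNge => cs.
  have := Etan s0 hc; rewrite acp1 subrr mul0r addr0 Ec.
  done.
case: (leP u c) => uc.
  by rewrite GG_small // /hh uc mul0r addr0.
have [GE G0] := GG_big (ltW uc).
have ->: hh u = E u by rewrite /hh leNgt uc.
rewrite GE.
case: (leP s c) => sc.
  have -> : hh s = 0 by rewrite /hh sc.
  have := Etan (ltW hc) (lt_trans hc uc); rewrite Ec => H.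
  apply: le_trans H; rewrite lerD2l ler_wpM2l //; lra.
have -> : hh s = E s by rewrite /hh leNgt sc.
exact: Etan s0 (lt_trans hc uc).
Qed.
Arguments keyH {s u}.

Lemma hop_proxE x : hop_prox p c x = GG `|x| * Num.sg x.
Proof.
rewrite /hop_prox /GG normr_eq0; case: ifP => // /eqP ->.
by rewrite mul0r.
Qed.

Lemma keyA t x : hh `|x| + hop_prox p c x * (t - x) <= hh `|t|.
Proof.
apply: le_trans (keyH (normr_ge0 t) (normr_ge0 x)).
rewrite lerD2l hop_proxE -mulrA ler_wpM2l ?GG_ge0 //.
have := ler_norm t; have := ler_norm (- t); rewrite normrN.
have [x0|x0|->] := ltrgt0P x.
- rewrite gtr0_sg //; lra.
- rewrite ltr0_sg //; lra.
- rewrite sgr0; lra.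
Qed.

Lemma reform t x y : hop p c t - (t - y) ^+ 2 / 2 <= hop p c x - (x - y) ^+ 2 / 2 <->
  hh `|x| + y * (t - x) <= hh `|t|.
Proof.
rewrite !hopE.
have e z : z ^+ 2 / 2 - (z - y) ^+ 2 / 2 = z * y - y ^+ 2 / 2 by field.
have e1 := e t; have e2 := e x.
split => H; lra.
Qed.

Let f (t : R) := t - a * t `^ (p - 1).

Lemma f_cont {x : R} : 0 < x -> {for x, continuous (f : R -> R)}.
Proof.
move=> x0; apply: differentiable_continuous.
apply: differentiableB => //; apply: differentiableM => //.
apply/derivable1_diffP; apply: derivable_powR; rewrite in_itv /= andbT //.
Qed.

Lemma right_lim x y : 0 < x -> (forall t, x < t -> y <= f t) -> y <= f x.
Proof.
move=> x0 H; rewrite leNgt; apply/negP => fxy.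
have := f_cont x0; move/cvgrPdist_lt => /(_ (y - f x)); rewrite subr_gt0 => /(_ fxy).
move/nbhs_ballP => [d d0 Hd].
have : ball x d (x + d / 2).
  rewrite /ball /= opprD addrA subrr add0r normrN gtr0_norm ?divr_gt0 //.
  by rewrite ltr_pdivrMr // ltr_pMr // ltr1n.
move/Hd => /= Hb.
have := H (x + d / 2); rewrite ltrDl divr_gt0 // => /(_ isT) Hy.
have := ler_norm (f (x + d / 2) - f x); rewrite distrC; lra.
Qed.

Lemma left_lim x y : 0 < x -> (forall t, 0 < t -> t < x -> f t <= y) -> f x <= y.
Proof.
move=> x0 H; rewrite leNgt; apply/negP => fxy.
have := f_cont x0; move/cvgrPdist_lt => /(_ (f x - y)); rewrite subr_gt0 => /(_ fxy).
move/nbhs_ballP => [d d0 Hd].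
set e := Num.min (d / 2) (x / 2).
have e0 : 0 < e by rewrite lt_min !divr_gt0.
have ed : e < d by rewrite gt_min ltr_pdivrMr // ltr_pMr // ltr1n.
have ex : e < x by rewrite gt_min orbC ltr_pdivrMr // ltr_pMr // ltr1n.
have : ball x d (x - e).
  by rewrite /ball /= opprB addrC subrK gtr0_norm.
move/Hd => /= Hb.
have := H (x - e); rewrite subr_gt0 ex gtrBl e0 => /(_ isT isT) Hy.
have := ler_norm (f x - f (x - e)); lra.
Qed.

Lemma uniq_pos x y : 0 <= x -> (forall t, hh `|x| + y * (t - x) <= hh `|t|) ->
  y = hop_prox p c x.
Proof.
move=> x0 S.
have mono t : (y - hop_prox p c t) * (t - x) <= 0.
  have := keyA x t; have := S t; rewrite mulrBl; lra.
have R1 t : x < t -> y <= hop_prox p c t.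
  move=> xt; have := mono t; rewrite pmulr_lle0 ?subr_gt0 // subr_le0 //.
have L1 t : t < x -> hop_prox p c t <= y.
  move=> xt; have := mono t; rewrite nmulr_lle0 ?subr_lt0 // subr_ge0 //.
have gpos t : 0 < t -> hop_prox p c t = GG t.
  by move=> t0; rewrite hop_proxE gtr0_sg // mulr1 gtr0_norm.
case: (ltP x c) => xc.
  have gx : hop_prox p c x = 0 by rewrite hop_proxE GG_small ?mul0r // ger0_norm // ltW.
  rewrite gx; apply/eqP; rewrite eq_le; apply/andP; split.
    have := R1 ((x + c) / 2); rewrite gpos ?GG_small; first (apply; lra); lra.
  have := L1 ((x - c) / 2); rewrite hop_proxE GG_small ?mul0r; first (apply; lra).
    exact: normr_ge0.
  rewrite ler_norml; apply/andP; split; lra.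
have x0' : 0 < x by exact: lt_le_trans xc.
have gx : hop_prox p c x = f x by rewrite gpos // (GG_big xc).1.
rewrite gx; apply/eqP; rewrite eq_le; apply/andP; split.
  apply: right_lim => // t xt; rewrite /f -(GG_big (le_trans xc (ltW xt))).1 -gpos.
    exact: R1.
  exact: lt_trans xt.
apply: left_lim => // t t0 tx; apply: le_trans (L1 t tx).
rewrite gpos // /GG (gt_eqF t0) le_max lexx orbT //.
Qed.

Lemma uniq_all x y : (forall t, hh `|x| + y * (t - x) <= hh `|t|) ->
  y = hop_prox p c x.
Proof.
case: (leP 0 x) => x0; first exact: uniq_pos.
move=> S.
have S' t : hh `|- x| + (- y) * (t - - x) <= hh `|t|.
  have := S (- t); rewrite normrN !normrN; lra.
have nx : 0 <= - x by rewrite oppr_ge0 ltW.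
have := @uniq_pos (- x) (- y) nx S'.
rewrite !hop_proxE normrN sgrN mulrN => /eqP; rewrite eqr_opp => /eqP //.
Qed.

Lemma partA t x : hop p c t - (t - hop_prox p c x) ^+ 2 / 2 <=
  hop p c x - (x - hop_prox p c x) ^+ 2 / 2.
Proof. by apply/reform; exact: keyA. Qed.

Lemma partU x y : (forall t, hop p c t - (t - y) ^+ 2 / 2 <= hop p c x - (x - y) ^+ 2 / 2) ->
  y = hop_prox p c x.
Proof. by move=> H; apply: uniq_all => t; apply/reform. Qed.
End S.

Theorem mainTheorem1 (R : realType) (p c : R) (hc : 0 < c) (hp0 : 0 < p) (hp1 : p <= 1)
  (x : R) :
  (forall y : R, ((hop p c x)%:E <= ((x - y) ^+ 2 / 2)%:E + hop_phi p c y)%E) /\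
  (((x - hop_prox p c x) ^+ 2 / 2)%:E + hop_phi p c (hop_prox p c x) = (hop p c x)%:E)%E /\
  (forall y : R, (((x - y) ^+ 2 / 2)%:E + hop_phi p c y = (hop p c x)%:E)%E ->
     y = hop_prox p c x).
Proof.
have ub y t : ((hop p c t - (t - y) ^+ 2 / 2)%:E <= hop_phi p c y)%E.
  by apply: ereal_sup_ubound; exists t.
split.
  move=> y; apply: le_trans (leeD2l _ (ub y x)).
  by rewrite -EFinD lee_fin addrC subrK.
split.
  set y := hop_prox p c x.
  have phiE : hop_phi p c y = (hop p c x - (x - y) ^+ 2 / 2)%:E.
    apply/le_anti/andP; split; last exact: ub.
    apply: ge_ereal_sup => z [t _ <-]; rewrite lee_fin.
    exact: partA.
  by rewrite phiE -EFinD addrC subrK.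
move=> y Heq; apply: (@partU R p c hc hp0 hp1 x y) => t.
have := leeD2l (((x - y) ^+ 2 / 2)%:E) (ub y t); rewrite Heq -EFinD lee_fin.
move=> H; lra.
Qed.
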